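(* Let $E=E^\top\in\mathbb{R}^{n\times n}$ be positive definite, let $\alpha>0$, let $c_1,c_2\in\mathbb{R}^n$, and let $\mathcal{E}_\alpha=\{x\in\mathbb{R}^n : x^\top E x\leq\alpha^2\}$. Define $\phi(x)=x^\top Q x$ with $Q=\tfrac12(c_1c_2^\top+c_2c_1^\top)$. Let $W$ be either $(c_1^\top E^{-1}c_1)\,c_2c_2^\top$ or $(c_2^\top E^{-1}c_2)\,c_1c_1^\top$. Then $$\begin{bmatrix} x\\ \phi(x)\end{bmatrix}^\top\begin{bmatrix}\alpha^2 W & 0\\ 0 & -1\end{bmatrix}\begin{bmatrix} x\\ \phi(x)\end{bmatrix}\geq 0\quad\text{for all } x\in\mathcal{E}_\alpha,$$ i.e. $\phi(x)^2\leq \alpha^2 x^\top W x$ for all $x\in\mathcal{E}_\alpha$. *)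

(* Defs.v *)
From mathcomp Require Import all_boot all_order all_algebra.
From mathcomp Require Import reals.
Set Implicit Arguments. Unset Strict Implicit. Unset Printing Implicit Defensive.
Import Order.TTheory GRing.Theory Num.Theory.
Local Open Scope ring_scope.

Definition qform (R : pzRingType) (n : nat) (x : 'cV[R]_n) (A : 'M[R]_n) (y : 'cV[R]_n) : R :=
  (x^T *m A *m y) 0 0.

Definition posdef (R : numDomainType) (n : nat) (E : 'M[R]_n) : Prop :=
  E^T = E /\ forall x : 'cV[R]_n, x != 0 -> 0 < qform x E x.

Definition ellipsoid (R : numDomainType) (n : nat) (E : 'M[R]_n) (alpha : R) : pred 'cV[R]_n :=
  fun x => qform x E x <= alpha ^+ 2.

Definition Qmat (R : fieldType) (n : nat) (c1 c2 : 'cV[R]_n) : 'M[R]_n :=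
  2^-1 *: (c1 *m c2^T + c2 *m c1^T).

Definition phi (R : fieldType) (n : nat) (c1 c2 : 'cV[R]_n) (x : 'cV[R]_n) : R :=
  qform x (Qmat c1 c2) x.

Definition W1 (R : fieldType) (n : nat) (E : 'M[R]_n) (c1 c2 : 'cV[R]_n) : 'M[R]_n :=
  qform c1 (invmx E) c1 *: (c2 *m c2^T).
Definition W2 (R : fieldType) (n : nat) (E : 'M[R]_n) (c1 c2 : 'cV[R]_n) : 'M[R]_n :=
  qform c2 (invmx E) c2 *: (c1 *m c1^T).

(* Main.v *)
Require Import Defs.
From mathcomp Require Import all_boot all_order all_algebra.
From mathcomp Require Import reals ring lra.
Import Order.TTheory GRing.Theory Num.Theory.
Local Open Scope ring_scope.

Section S.
Variable R : realType.
Variable n : nat.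
Implicit Types (x y u v : 'cV[R]_n) (A : 'M[R]_n).

Lemma qformDl u v A y : qform (u + v) A y = qform u A y + qform v A y.
Proof. by rewrite /qform linearD /= !mulmxDl mxE. Qed.
Lemma qformDr x A u v : qform x A (u + v) = qform x A u + qform x A v.
Proof. by rewrite /qform mulmxDr mxE. Qed.
Lemma qformZl (t : R) u A y : qform (t *: u) A y = t * qform u A y.
Proof. by rewrite /qform linearZ /= -!scalemxAl mxE. Qed.
Lemma qformZr (t : R) x A u : qform x A (t *: u) = t * qform x A u.
Proof. by rewrite /qform -scalemxAr mxE. Qed.
Lemma qform_sym x A y : A^T = A -> qform x A y = qform y A x.
Proof.
move=> hA; rewrite /qform -[in LHS](trmxK (x^T *m A *m y)) mxE.
by rewrite !trmx_mul trmxK hA mulmxA.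
Qed.

Lemma m11 (A B : 'M[R]_1) : (A *m B) 0 0 = A 0 0 * B 0 0.
Proof. by rewrite mxE big_ord1. Qed.

Lemma qform_outer x u v : qform x (u *m v^T) x = (x^T *m u) 0 0 * (v^T *m x) 0 0.
Proof. by rewrite /qform mulmxA -mulmxA m11. Qed.

Lemma dotC u v : (u^T *m v) 0 0 = (v^T *m u) 0 0.
Proof. by rewrite -[in LHS](trmxK (u^T *m v)) mxE trmx_mul trmxK. Qed.

Lemma psd E x : posdef E -> 0 <= qform x E x.
Proof.
case=> _ hE; have [->|nz] := eqVneq x 0.
  by rewrite /qform mulmx0 mxE.
exact/ltW/hE.
Qed.

Lemma CS E x y : posdef E -> qform y E x ^+ 2 <= qform y E y * qform x E x.
Proof.
move=> hE; have [hs hp] := hE.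
have [->|nz] := eqVneq y 0.
  by rewrite /qform trmx0 !mul0mx mxE expr0n /= mul0r.
have p0 := hp _ nz.
set p := qform y E y; set q := qform x E x; set r := qform y E x.
have := @psd E ((- (r / p)) *: y + x) hE.
rewrite !(qformDl, qformDr, qformZl, qformZr) (qform_sym x E y hs) -/p -/q -/r.
move=> h.
have e : - (r / p) * (- (r / p) * p) + - (r / p) * r + (- (r / p) * r + q) = q - r ^+ 2 / p.
  by field; rewrite gt_eqF.
rewrite e subr_ge0 ler_pdivrMr // in h.
by rewrite mulrC.
Qed.

Lemma unitE (E : 'M[R]_n) : posdef E -> E \in unitmx.
Proof.
move=> [hs hp]; rewrite unitmxE unitfE; apply/negP => /det0P [v nz hv].
have : v^T != 0 by rewrite -(inj_eq (@trmx_inj _ _ _)) trmxK trmx0.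
by move/hp; rewrite /qform trmxK hv mul0mx mxE ltxx.
Qed.

Lemma qformDm x A B y : qform x (A + B) y = qform x A y + qform x B y.
Proof. by rewrite /qform mulmxDr mulmxDl mxE. Qed.
Lemma qformZm (t : R) x A y : qform x (t *: A) y = t * qform x A y.
Proof. by rewrite /qform -scalemxAr -scalemxAl mxE. Qed.

Lemma keyW1 (E : 'M[R]_n) alpha c1 c2 x : posdef E -> x \in ellipsoid E alpha ->
  phi c1 c2 x ^+ 2 <= alpha ^+ 2 * qform x (W1 E c1 c2) x.
Proof.
move=> hE hx; have [hs hp] := hE.
have hu := unitE E hE.
set a := (c1^T *m x) 0 0; set b := (c2^T *m x) 0 0.
have -> : phi c1 c2 x = a * b.
  rewrite /phi /Qmat qformZm qformDm !qform_outer (dotC x c1) (dotC x c2) -/a -/b.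
  by field.
rewrite /W1 qformZm qform_outer (dotC x c2) -/b.
set y := invmx E *m c1.
have c1E : c1 = E *m y by rewrite /y mulKVmx.
have ea : a = qform y E x by rewrite /a /qform c1E trmx_mul hs.
have ek : qform c1 (invmx E) c1 = qform y E y.
  by rewrite /qform c1E trmx_mul hs -!mulmxA mulKmx.
rewrite ek; set k := qform y E y.
have k0 : 0 <= k := psd E y hE.
have ha : a ^+ 2 <= k * alpha ^+ 2.
  rewrite ea; apply: le_trans (CS E x y hE) _.
  by rewrite ler_wpM2l.
have b0 : 0 <= b ^+ 2 := sqr_ge0 b.
rewrite exprMn.
have := ler_wpM2r b0 ha.
by rewrite expr2 -(expr2 b) => h; apply: le_trans h _; rewrite !mulrA; rewrite le_eqVlt; apply/orP; left; apply/eqP; ring.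
Qed.
End S.

Lemma phiC (R : realType) n (c1 c2 x : 'cV[R]_n) : phi c1 c2 x = phi c2 c1 x.
Proof. by rewrite /phi /Qmat addrC. Qed.

Theorem lemma4 (R : realType) (n : nat) (E : 'M[R]_n) (alpha : R)
    (c1 c2 : 'cV[R]_n) (W : 'M[R]_n) :
  posdef E -> 0 < alpha ->
  (W = W1 E c1 c2 \/ W = W2 E c1 c2) ->
  forall x : 'cV[R]_n, x \in ellipsoid E alpha ->
    0 <= ((col_mx x (phi c1 c2 x)%:M)^T
           *m block_mx (alpha ^+ 2 *: W) 0 0 (-1 : 'M[R]_1)
           *m col_mx x (phi c1 c2 x)%:M) 0 0.
Proof.
move=> hE ha hW x hx.
rewrite tr_col_mx mul_row_block mul_row_col !mulmx0 addr0 add0r.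
rewrite mxE -/(qform _ _ _) qformZm !m11 tr_scalar_mx !mxE /= mulr1n.
have h : phi c1 c2 x ^+ 2 <= alpha ^+ 2 * qform x W x.
  case: hW => ->; first exact: keyW1.
  rewrite phiC; exact: keyW1.
rewrite mulrN1 mulNr subr_ge0 -expr2.
exact: h.
Qed.
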